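(* Let $G$ be a modular noetherian right $\ell$-group with strong order unit $s$ and degree homomorphism $\deg$. Let $d \geq 1$, and let $g \in G^-$ be $d$-homogeneous with right-normal factorization $g = g_k g_{k-1}\cdots g_1$. Then this factorization is also left-normal. That is, the sequence $h_i := g_{k+1-i}$ ($1 \leq i \leq k$) is the left-normal factorization $g = h_1 h_2 \cdots h_k$.
   Context: A right $\ell$-group is a group $G$ (identity $e$) with a right-invariant partial order making $G$ a lattice. It is modular if the lattice is modular. It is noetherian if for each $g$ the set $\{h \geq g\}$ satisfies the descending chain condition and the set $\{h \leq g\}$ satisfies the ascending chain condition. $G^- = \{g \leq e\}$ and $[a,b] = \{x : a\leq x\leq b\}$. A strong order unit is an element $s > e$ such that $x \mapsto sx$ is a lattice automorphism and every $g$ satisfies $g \leq s^k$ for some $k \in \mathbb{Z}$. $\deg : G \to \mathbb{Z}$ is the unique group homomorphism sending $g \in G^-$ to the common length of its factorizations into elements covered by $e$. A right-normal factorization of $g \in G^-$ is a sequence $g_1,\dots,g_k \in [s^{-1},e] \setminus \{e\}$ with $g = g_k\cdots g_1$ such that, for $1 \leq i < k$, there are no $h,h' \in G^-$ with $h\neq e$, $h'h = g_{i+1}$, $hg_i \in [s^{-1},e]$. It exists and is unique. A left-normal factorization of $g$ is a sequence $h_1,\dots,h_k \in [s^{-1},e]\setminus\{e\}$ with $g = h_1\cdots h_k$ such that, for $1 \leq i<k$, there are no $h,h' \in G^-$ with $h \neq e$, $hh' = h_{i+1}$, $h_ih \in [s^{-1},e]$. The element $g$ is $d$-homogeneous if every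 factor $g_i$ of its right-normal factorization satisfies $\deg(g_i) = d$. *)

(* Defs.v *)
From HB Require Import structures.
From mathcomp Require Import all_boot all_order ssralg ssrint.
Set Implicit Arguments. Unset Strict Implicit. Unset Printing Implicit Defensive.
Import Order.TTheory.
Local Open Scope order_scope.

Section RLGroup.
Context {disp : Order.disp_t} {T : latticeType disp}.
Variables (mul : T -> T -> T) (inv : T -> T) (e : T).

Definition is_right_lgroup : Prop :=
  (forall x y z, mul x (mul y z) = mul (mul x y) z) /\
  (forall x, mul e x = x) /\ (forall x, mul x e = x) /\
  (forall x, mul (inv x) x = e) /\ (forall x, mul x (inv x) = e) /\
  (forall x y z, x <= y -> mul x z <= mul y z).

Definition modular_lattice : Prop :=
  forall x y z : T, x <= z -> x `|` (y `&` z) = (x `|` y) `&` z.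

Definition noetherian : Prop :=
  forall g : T,
    (~ exists f : nat -> T, forall n, g <= f n /\ f n.+1 < f n) /\
    (~ exists f : nat -> T, forall n, f n <= g /\ f n < f n.+1).

Definition zpow (x : T) (k : int) : T :=
  match k with
  | Posz n => iter n (mul x) e
  | Negz n => iter n.+1 (mul (inv x)) e
  end.

Definition strong_order_unit (s : T) : Prop :=
  [/\ e < s,
      bijective (mul s),
      {morph (mul s) : x y / x `&` y},
      {morph (mul s) : x y / x `|` y}
    & forall g, exists k : int, g <= zpow s k].

Definition covered_by_e (a : T) : Prop :=
  a < e /\ ~ exists c, a < c /\ c < e.

Definition prodl (xs : seq T) : T := foldr mul e xs.

Definition is_degree (deg : T -> int) : Prop :=
  (forall x y, deg (mul x y) = (deg x + deg y)%R) /\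
  (forall (g : T) (xs : seq T), g <= e -> (forall a, a \in xs -> covered_by_e a) ->
     g = prodl xs -> deg g = Posz (size xs)).

Definition in_box (s x : T) : Prop := inv s <= x /\ x <= e.

(* right-normal factorization: gs = [:: g_1; ...; g_k] with g = g_k ... g_1 *)
Definition right_normal (s g : T) (gs : seq T) : Prop :=
  [/\ (forall x, x \in gs -> in_box s x /\ x != e),
      g = prodl (rev gs)
    & forall i, i.+1 < size gs ->
        ~ exists h h', [/\ h <= e, h' <= e, h != e,
                          mul h' h = nth e gs i.+1 & in_box s (mul h (nth e gs i))]].

(* left-normal factorization: hs = [:: h_1; ...; h_k] with g = h_1 ... h_k *)
Definition left_normal (s g : T) (hs : seq T) : Prop :=
  [/\ (forall x, x \in hs -> in_box s x /\ x != e),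
      g = prodl hs
    & forall i, i.+1 < size hs ->
        ~ exists h h', [/\ h <= e, h' <= e, h != e,
                          mul h h' = nth e hs i.+1 & in_box s (mul (nth e hs i) h)]].

End RLGroup.

(* Main.v *)
Require Import Defs.
From mathcomp Require Import all_boot all_order ssralg ssrint.
From Stdlib Require Import Classical ClassicalEpsilon.
From mathcomp Require Import zify.
Import Order.TTheory.
Local Open Scope order_scope.

Section Proof7.
Context {disp : Order.disp_t} {T : latticeType disp}.
Variables (mul : T -> T -> T) (inv : T -> T) (e : T).
Hypothesis mulA : forall x y z, mul x (mul y z) = mul (mul x y) z.
Hypothesis mul1l : forall x, mul e x = x.
Hypothesis mul1r : forall x, mul x e = x.
Hypothesis mulVx : forall x, mul (inv x) x = e.
Hypothesis mulxV : forall x, mul x (inv x) = e.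
Hypothesis mono : forall x y z, x <= y -> mul x z <= mul y z.

Lemma mulKl x y : mul (inv x) (mul x y) = y.
Proof. by rewrite mulA mulVx mul1l. Qed.
Lemma mulKr x y : mul (mul y x) (inv x) = y.
Proof. by rewrite -mulA mulxV mul1r. Qed.
Lemma mulKVr x y : mul (mul y (inv x)) x = y.
Proof. by rewrite -mulA mulVx mul1r. Qed.
Lemma mulIl x y z : mul x y = mul x z -> y = z.
Proof. by move=> H; rewrite -(mulKl x y) H mulKl. Qed.
Lemma mulIr x y z : mul y x = mul z x -> y = z.
Proof. by move=> H; rewrite -(mulKr x y) H mulKr. Qed.
Lemma lerM2r x y z : (mul x z <= mul y z) = (x <= y).
Proof.
apply/idP/idP => [H|]; last exact: mono.
by have := mono _ _ (inv z) H; rewrite !mulKr.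
Qed.
Lemma ltrM2r x y z : (mul x z < mul y z) = (x < y).
Proof.
rewrite !lt_neqAle lerM2r; congr (_ && _).
congr negb; apply/eqP/eqP => [/mulIr|->] //.
Qed.
Lemma le_div x y : (x <= y) = (mul x (inv y) <= e).
Proof. by rewrite -(lerM2r x y (inv y)) mulxV. Qed.
Lemma lt_div x y : (x < y) = (mul x (inv y) < e).
Proof. by rewrite -(ltrM2r x y (inv y)) mulxV. Qed.

Definition cov (u v : T) : Prop := u < v /\ ~ exists t, u < t /\ t < v.

Lemma cov_div u v : cov u v -> covered_by_e e (mul u (inv v)).
Proof.
move=> [uv Hn]; split; first by rewrite -lt_div.
move=> [c [H1 H2]]; apply: Hn; exists (mul c v); split.
  by rewrite -(ltrM2r _ _ (inv v)) mulKr.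
by rewrite -(ltrM2r _ _ (inv v)) mulKr mulxV.
Qed.

Fixpoint cchain (x : T) (l : seq T) (y : T) : Prop :=
  if l is z :: l' then cov x z /\ cchain z l' y else x = y.

Lemma cchain_le x l y : cchain x l y -> x <= y.
Proof.
elim: l x => [|z l IH] x /=; first by move=> ->.
by move=> [[/ltW xz _] /IH]; apply: le_trans.
Qed.

Lemma cchain_prod x l y : cchain x l y -> exists xs,
  [/\ size xs = size l, forall a, a \in xs -> covered_by_e e a
    & mul x (inv y) = prodl mul e xs].
Proof.
elim: l x => [|z l IH] x /=.
  by move=> ->; exists [::]; split => //; rewrite mulxV.
move=> [cz /IH [xs [H1 H2 H3]]]; exists (mul x (inv z) :: xs); split => /=.
- by rewrite H1.
- move=> a; rewrite in_cons => /orP [/eqP ->|]; [exact: cov_div | exact: H2].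
- by rewrite -H3 -mulA (mulA (inv z)) mulVx mul1l.
Qed.

Lemma cchain_rcons x l y z : cchain x l y -> cov y z -> cchain x (rcons l z) z.
Proof.
elim: l x => [|w l IH] x /=; first by move=> -> H.
by move=> [H1 H2] H3; split => //; apply: IH.
Qed.

Variable deg : T -> int.
Hypothesis Hdeg : is_degree mul e deg.

Lemma cchain_deg x l y : cchain x l y -> deg (mul x (inv y)) = Posz (size l).
Proof.
move=> H; have [xs [H1 H2 H3]] := cchain_prod _ _ _ H.
rewrite -H1; apply: Hdeg.2 => //.
by rewrite -le_div; apply: cchain_le H.
Qed.

Lemma deg_e : deg e = 0%R.
Proof.
have := Hdeg.1 e e; rewrite mul1l => H.
lia.
Qed.

Lemma deg_inv x : deg (inv x) = (- deg x)%R.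
Proof. have := Hdeg.1 x (inv x); rewrite mulxV deg_e; lia. Qed.

Hypothesis Hnoeth : @noetherian disp T.
Hypothesis Hmod : @modular_lattice disp T.

Lemma exists_cover x y : x < y -> exists c, cov x c /\ c <= y.
Proof.
move=> xy; apply: NNPP => Hn.
have step : forall c, x < c -> c <= y -> exists t, x < t /\ t < c.
  move=> c xc cy; apply: NNPP => Ht; apply: Hn; exists c; split => //.
pose F c := epsilon (inhabits e) (fun t => x < t /\ t < c).
have HF : forall c, x < c -> c <= y -> x < F c /\ F c < c.
  by move=> c xc cy; apply: (epsilon_spec (inhabits e) (fun t => x < t /\ t < c)); apply: step.
pose f n := iter n F y.
have Hf : forall n, x < f n /\ f n <= y.
  elim=> [|n [IH1 IH2]] /=; first by split.
  have [H1 H2] := HF _ IH1 IH2; split => //; exact: le_trans (ltW H2) IH2.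
apply: (Hnoeth x).1; exists f => n; split; first exact: ltW (Hf n).1.
exact: (HF _ (Hf n).1 (Hf n).2).2.
Qed.

Lemma exists_chain x y : x <= y -> exists l, cchain x l y.
Proof.
move=> xy.
pose G z := if z < y then epsilon (inhabits e) (fun c => cov z c /\ c <= y) else z.
have HG : forall z, z < y -> cov z (G z) /\ G z <= y.
  move=> z zy; rewrite /G zy.
  by apply: (epsilon_spec (inhabits e) (fun c => cov z c /\ c <= y)); apply: exists_cover.
pose u n := iter n G x.
have Hu : forall n, u n <= y /\ exists l, cchain x l (u n).
  elim=> [|n [IH1 [l IHl]]] /=; first by split => //; exists [::].
  case: (boolP (u n < y)) => H.
    have [H1 H2] := HG _ H; split => //; exists (rcons l (G (u n))).
    exact: cchain_rcons IHl H1.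
  by rewrite /G (negbTE H); split => //; exists l.
have [n Hn] : exists n, ~~ (u n < y).
  apply: NNPP => Hn; apply: (Hnoeth y).2; exists u => n; split; first exact: (Hu n).1.
  have H : u n < y by apply/negPn/negP => H; apply: Hn; exists n.
  exact: (HG _ H).1.1.
have [H1 [l Hl]] := Hu n.
exists l; move: H1; rewrite le_eqVlt (negbTE Hn) orbF => /eqP <-; exact: Hl.
Qed.

Lemma modK (b a w : T) : b `&` a <= w -> w <= a -> (w `|` b) `&` a = w.
Proof. by move=> H1 H2; rewrite -Hmod // (join_idPl H1). Qed.

Lemma cov_transfer (b a u v : T) : b `&` a <= u -> v <= a -> cov u v ->
  cov (u `|` b) (v `|` b).
Proof.
move=> mu va [uv Hn].
have ua : u <= a := le_trans (ltW uv) va.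
have mv : b `&` a <= v := le_trans mu (ltW uv).
split.
  rewrite lt_neqAle leU2 // ?(ltW uv) // andbT.
  apply/negP => /eqP H; move: uv; rewrite -(modK _ _ _ mu ua) H (modK _ _ _ mv va) ltxx //.
move=> [t [H1 H2]]; apply: Hn; exists (t `&` a).
have bt : b <= t := le_trans (leUr b u) (ltW H1).
have tE : b `|` (a `&` t) = t.
  rewrite Hmod // (meet_idPr _) //; apply: le_trans (ltW H2) _.
  by rewrite leUx leUl andbT (le_trans va (leUr a b)).
split.
  rewrite lt_neqAle lexI ua (le_trans (leUl u b) (ltW H1)) !andbT.
  apply/negP => /eqP H; move: H1; rewrite -tE meetC -H joinC ltxx //.
rewrite lt_neqAle -{2}(modK _ _ _ mv va) leI2 ?(ltW H2) // andbT.
apply/negP => /eqP H; move: H2; rewrite -tE meetC H joinC ltxx //.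
Qed.

Lemma chain_transfer (b a u v : T) l : b `&` a <= u -> v <= a -> cchain u l v ->
  cchain (u `|` b) (map (fun z => z `|` b) l) (v `|` b).
Proof.
elim: l u => [|z l IH] u /=; first by move=> _ _ ->.
move=> mu va [H1 H2].
have za : z <= a := le_trans (cchain_le _ _ _ H2) va.
split; first exact: (cov_transfer _ _ _ _ mu za H1).
by apply: IH => //; apply: le_trans mu (ltW H1.1).
Qed.

Variable s : T.
Hypothesis Hsm : {morph (mul s) : x y / x `&` y}.

Lemma lerM2l_s x y : (mul s x <= mul s y) = (x <= y).
Proof.
apply/idP/idP => H.
  have : mul s (x `&` y) = mul s x by rewrite Hsm (meet_idPl H).
  by move/mulIl => <-; exact: leIr.
by rewrite -(meet_idPl H) Hsm leIr.
Qed.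

Lemma leD x y : x <= y -> mul (inv s) x <= mul (inv s) y.
Proof. by move=> H; rewrite -lerM2l_s !mulA !mulxV !mul1l. Qed.

Lemma key (a b : T) : in_box inv e s a -> in_box inv e s b -> deg a = deg b ->
  ~ (exists H H', [/\ H <= e, H' <= e, H != e, mul H' H = b & in_box inv e s (mul H a)]) ->
  ~ (exists h h', [/\ h <= e, h' <= e, h != e, mul h h' = a & in_box inv e s (mul b h)]).
Proof.
move=> [Da ae] [Db be] degab HR [h [h' [he h'e hne hh' [Dbh bhe]]]].
set D := inv s in Da Db Dbh *.
set a' := mul D (inv a).
have a'a : mul a' a = D by rewrite /a' mulKVr.
have a'e : a' <= e by rewrite -(lerM2r _ _ a) a'a mul1l.
have ze : b `|` a' = e.
  case: (eqVneq (b `|` a') e) => // zne; exfalso; apply: HR.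
  set z := b `|` a' in zne *.
  exists z, (mul b (inv z)); split.
  - by rewrite leUx be a'e.
  - by rewrite -le_div leUl.
  - exact: zne.
  - by rewrite mulKVr.
  - split.
      by have := mono a' z a (leUr a' b); rewrite a'a.
    apply: le_trans ae; rewrite -{2}(mul1l a); apply: mono; by rewrite leUx be a'e.
set m := b `&` a'.
set w := mul D (inv h).
have wb : w <= b by have := mono _ _ (inv h) Dbh; rewrite mulKr.
have ha : inv h <= inv a.
  have -> : inv h = mul h' (inv a) by rewrite -(mulKl h h') hh' mulKr.
  by rewrite -{2}(mul1l (inv a)); apply: mono.
have wa : w <= a' by apply: leD.
have Dw : D < w.
  rewrite lt_neqAle; apply/andP; split.
    apply/eqP => H; apply/negP: hne; apply/negPn/eqP.
    have : mul D e = mul D (inv h) by rewrite mul1r.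
    move/mulIl => H2; by have := mulxV h; rewrite -H2 mul1r.
  rewrite -{1}(mul1r D); apply: leD.
  by have := mono _ _ (inv h) he; rewrite mulxV mul1l.
have Dm : D < m by apply: lt_le_trans Dw _; rewrite lexI wb wa.
have [l1 Hl1] := exists_chain _ _ (ltW Dm).
have [l2 Hl2] := exists_chain m a' (leIr a' b).
have Hl3 := chain_transfer b a' m a' l2 (lexx _) (lexx _) Hl2.
rewrite (join_idPr (leIl b a')) joinC ze in Hl3.
have E1 := cchain_deg _ _ _ Hl1.
have E2 := cchain_deg _ _ _ Hl2.
have E3 := cchain_deg _ _ _ Hl3.
have l1n : (0 < size l1)%N.
  case: l1 Hl1 {E1} => //= Hx; by move: Dm; rewrite Hx ltxx.
rewrite size_map in E3.
rewrite (Hdeg.1 D) deg_inv in E1.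
rewrite (Hdeg.1 m) deg_inv /a' (Hdeg.1 D) deg_inv in E2.
rewrite (Hdeg.1 b) deg_inv deg_e in E3.
move: l1n E1 E2 E3 degab.
move: (size l1) (size l2) (deg D) (deg m) (deg a) (deg b) => n1 n2 x1 x2 x3 x4.
move=> H0 H1 H2 H3 H4; clear -H0 H1 H2 H3 H4; lia.
Qed.

End Proof7.

Theorem mainTheorem7 (disp : Order.disp_t) (T : latticeType disp)
  (mul : T -> T -> T) (inv : T -> T) (e : T)
  (HG : is_right_lgroup mul inv e)
  (Hmod : @modular_lattice disp T)
  (Hnoeth : @noetherian disp T)
  (s : T) (Hs : strong_order_unit mul inv e s)
  (deg : T -> int) (Hdeg : is_degree mul e deg)
  (d : nat) (Hd : (1 <= d)%N)
  (g : T) (Hg : g <= e)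
  (gs : seq T) (Hrn : right_normal mul inv e s g gs)
  (Hhom : forall x, x \in gs -> deg x = Posz d) :
  left_normal mul inv e s g (rev gs).
Proof.
case: HG => [mulA [mul1l [mul1r [mulVx [mulxV mono]]]]].
case: Hs => [_ _ Hsm _ _].
case: Hrn => [Hbox Hprod Hcond].
split.
- by move=> x; rewrite mem_rev; exact: Hbox.
- exact: Hprod.
move=> i; rewrite size_rev => Hi.
rewrite !nth_rev //; last by lia.
have E : (size gs - i.+1 = (size gs - i.+2).+1)%N by lia.
rewrite E.
have Hj : ((size gs - i.+2).+1 < size gs)%N by lia.
have Hj' : ((size gs - i.+2) < size gs)%N by lia.
move: Hj Hj'; move: (size gs - i.+2)%N => j Hj Hj'.
apply: (@key disp T mul inv e mulA mul1l mul1r mulVx mulxV mono deg Hdeg Hnoeth Hmod s Hsm).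
- exact: (Hbox _ (mem_nth e Hj')).1.
- exact: (Hbox _ (mem_nth e Hj)).1.
- by rewrite !Hhom // mem_nth.
- exact: Hcond.
Qed.
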